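(* There does not exist a 5-vertex 3-graph $H$ that is simultaneously $K_4^{3-}$-free, $C_5$-free and $F_{3,2}$-free and has complete shadow graph.
   Context: A 3-graph is a 3-uniform hypergraph. $K_4^{3-}$ has vertex set $[4]$ and edges $123,124,134$; $C_5$ has vertex set $[5]$ and edges $123,234,345,145,125$; $F_{3,2}$ has vertex set $[5]$ and edges $123,145,245,345$. $H$ is $F$-free if it has no (not necessarily induced) subhypergraph isomorphic to $F$. The shadow graph of $H$ is the graph on $V(H)$ in which a pair is an edge iff it is contained in some edge of $H$; it is complete if every pair of vertices is such an edge. *)

(* Defs.v *)
From mathcomp Require Import all_boot.
Set Implicit Arguments. Unset Strict Implicit. Unset Printing Implicit Defensive.

Definition is_3graph (T : finType) (E : {set {set T}}) : Prop :=
  forall e, e \in E -> #|e| = 3.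

(* Pattern 3-graphs on vertex set 'I_k (vertex i of the paper is ordinal i-1). *)
Definition tri (k : nat) (a b c : 'I_k) : {set 'I_k} := [set a; b; c].

Definition K43m : {set {set 'I_4}} :=
  [set tri (inord 0) (inord 1) (inord 2); tri (inord 0) (inord 1) (inord 3);
       tri (inord 0) (inord 2) (inord 3)].

Definition C5 : {set {set 'I_5}} :=
  [set tri (inord 0) (inord 1) (inord 2); tri (inord 1) (inord 2) (inord 3);
       tri (inord 2) (inord 3) (inord 4); tri (inord 0) (inord 3) (inord 4);
       tri (inord 0) (inord 1) (inord 4)].

Definition F32 : {set {set 'I_5}} :=
  [set tri (inord 0) (inord 1) (inord 2); tri (inord 0) (inord 3) (inord 4);
       tri (inord 1) (inord 3) (inord 4); tri (inord 2) (inord 3) (inord 4)].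

Definition contains (k : nat) (F : {set {set 'I_k}}) (T : finType)
    (E : {set {set T}}) : Prop :=
  exists f : 'I_k -> T, injective f /\ forall e, e \in F -> f @: e \in E.

Definition free (k : nat) (F : {set {set 'I_k}}) (T : finType)
    (E : {set {set T}}) : Prop := ~ contains F E.

Definition shadow_complete (T : finType) (E : {set {set T}}) : Prop :=
  forall x y : T, x != y -> exists2 e, e \in E & (x \in e) && (y \in e).

(* Main.v *)
Require Import Defs.
From mathcomp Require Import all_boot.
Definition triples : seq (nat*nat*nat) := [:: (0,1,2);(0,1,3);(0,1,4);(0,2,3);(0,2,4);(0,3,4);(1,2,3);(1,2,4);(1,3,4);(2,3,4)].
Definition pw (a : nat) : nat := match a with 0 => 1 | 1 => 2 | 2 => 4 | 3 => 8 | _ => 16 end.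
Definition mask a b c := pw a + pw b + pw c.
Definition code0 a b c := index (mask a b c) [seq mask t.1.1 t.1.2 t.2 | t <- triples].
Definition tbl := Eval vm_compute in [seq [seq [seq code0 a b c | c <- iota 0 5] | b <- iota 0 5] | a <- iota 0 5].
Definition code a b c := nth 0 (nth [::] (nth [::] tbl a) b) c.
Definition lk (bits : seq bool) a b c := nth false bits (code a b c).
Definition shadowB (g : nat -> nat -> nat -> bool) :=
  all (fun a => all (fun b => (a < b) ==> has (fun c => (c != a) && (c != b) && g a b c) (iota 0 5)) (iota 0 5)) (iota 0 5).
Fixpoint perms_aux (n : nat) (l : seq nat) : seq (seq nat) := match n with 0 => [:: [::]] | n'.+1 => flatten [seq [seq x :: p | p <- perms_aux n' (rem x l)] | x <- l] end.
Definition perms5 := Eval vm_compute in perms_aux 5 (iota 0 5).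
Definition embB (L : seq (nat*nat*nat)) g := has (fun p => all (fun t => g (nth 0 p t.1.1) (nth 0 p t.1.2) (nth 0 p t.2)) L) perms5.
Definition LK : seq (nat*nat*nat) := [:: (0,1,2);(0,1,3);(0,2,3)].
Definition LC : seq (nat*nat*nat) := [:: (0,1,2);(1,2,3);(2,3,4);(0,3,4);(0,1,4)].
Definition LF : seq (nat*nat*nat) := [:: (0,1,2);(0,3,4);(1,3,4);(2,3,4)].
Definition patB g := [|| embB LK g, embB LC g | embB LF g].
Fixpoint allbits n := match n with 0 => [:: [::]] | n'.+1 => [seq b :: s | b <- [:: true; false], s <- allbits n'] end.
Lemma big_check : all (fun bits => shadowB (lk bits) ==> patB (lk bits)) (allbits 10).
Proof. vm_compute. reflexivity. Qed.
Lemma perms_ok : all (fun p => uniq p && (size p == 5) && all (fun x => x < 5) p) perms5.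
Proof. by vm_compute. Qed.

Lemma code_ok : all (fun a => all (fun b => all (fun c =>
  ((a != b) && (a != c) && (b != c)) ==> (code a b c < 10) &&
  (let t := nth (0,0,0) triples (code a b c) in
   [|| t == (a,b,c), t == (b,a,c), t == (a,c,b), t == (b,c,a), t == (c,a,b) | t == (c,b,a)]))
  (iota 0 5)) (iota 0 5)) (iota 0 5).
Proof. by vm_compute. Qed.

Definition mkbits (g : nat -> nat -> nat -> bool) := [seq g t.1.1 t.1.2 t.2 | t <- triples].

Lemma mem5 x : x < 5 -> x \in iota 0 5.
Proof. by rewrite mem_iota leq0n add0n. Qed.
Arguments mem5 {x}.

Lemma link g : (forall a b c, g a b c = g b a c) -> (forall a b c, g a b c = g a c b) ->
  forall a b c, a < 5 -> b < 5 -> c < 5 -> a != b -> a != c -> b != c ->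
  lk (mkbits g) a b c = g a b c.
Proof.
move=> S1 S2 a b c Ha Hb Hc Hab Hac Hbc.
move: (allP code_ok a (mem5 Ha)) => /allP /(_ b (mem5 Hb)) /allP /(_ c (mem5 Hc)).
rewrite Hab Hac Hbc /= => /andP [Hlt].
rewrite /lk /mkbits (nth_map (0,0,0)) //.
case: (nth _ triples _) => [[x y] z].
case/orP; first by move/eqP => [-> -> ->].
case/orP; first by move/eqP => [-> -> ->]; rewrite S1.
case/orP; first by move/eqP => [-> -> ->]; rewrite S2.
case/orP; first by move/eqP => [-> -> ->]; rewrite S2 S1.
case/orP; first by move/eqP => [-> -> ->]; rewrite S1 S2.
by move/eqP => [-> -> ->]; rewrite S1 S2 S1.
Qed.

Lemma allbitsP n s : size s = n -> s \in allbits n.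
Proof.
elim: n s => [|n IH] [|b s] //= [Hs].
rewrite !mem_cat; case: b; apply/orP; [left|right; apply/orP; left]; apply: map_f; exact: IH.
Qed.

Lemma imset3 (aT rT : finType) (f : aT -> rT) a b c : f @: [set a; b; c] = [set f a; f b; f c].
Proof. by rewrite !imsetU !imset_set1. Qed.

Lemma embed_ok n (F : {set {set 'I_n.+1}}) L (T : finType) (E : {set {set T}})
  (v : 'I_5 -> T) (h : nat -> nat -> nat -> bool) :
  injective v ->
  (forall a b c, a < 5 -> b < 5 -> c < 5 -> a != b -> a != c -> b != c ->
     h a b c -> [set v (inord a); v (inord b); v (inord c)] \in E) ->
  n < 5 ->
  (forall e, e \in F -> exists2 t, t \in L & e = tri (inord t.1.1) (inord t.1.2) (inord t.2)) ->
  all (fun t => [&& t.1.1 < n.+1, t.1.2 < n.+1, t.2 < n.+1, t.1.1 != t.1.2, t.1.1 != t.2 & t.1.2 != t.2]) L ->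
  embB L h -> contains F E.
Proof.
move=> vinj Hh Hn HF HL /hasP [p Hp /allP Hall].
have /andP [/andP [Hu /eqP Hs] /allP Hb] := allP perms_ok p Hp.
have Hi : forall i, i < n.+1 -> i < size p by move=> i Hi; rewrite Hs (leq_trans Hi).
pose f (i : 'I_n.+1) : T := v (inord (nth 0 p i)).
exists f; split.
  have Hb' : forall i, i < n.+1 -> nth 0 p i < 5 by move=> i Hi'; apply: Hb; apply: mem_nth; exact: Hi.
  move=> i j /vinj /(congr1 val) /=; rewrite !inordK ?Hb' //.
  by move/eqP; rewrite nth_uniq ?Hi // => /eqP /val_inj.
move=> e /HF [t Ht ->].
have /and5P [H1 H2 H3 H12 /andP [H13 H23]] := allP HL t Ht.
rewrite /tri imset3 /f !inordK //.
have Hd : forall i j, i < n.+1 -> j < n.+1 -> i != j -> nth 0 p i != nth 0 p j.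
  by move=> i j Hi' Hj' Hij; rewrite nth_uniq ?Hi.
apply: Hh; try apply: Hd => //; try (apply: Hb; apply: mem_nth; exact: Hi).
exact: Hall.
Qed.

Theorem lemma2p13 :
  ~ exists (T : finType) (E : {set {set T}}),
      #|T| = 5 /\ is_3graph E /\ free K43m E /\ free C5 E /\ free F32 E /\
      shadow_complete E.
Proof.
move=> [T [E [cardT [H3 [fK [fC [fF Hsh]]]]]]].
pose v (i : 'I_5) : T := enum_val (cast_ord (esym cardT) i).
have vinj : injective v by move=> i j /enum_val_inj /cast_ord_inj.
have vsurj : forall x, exists i, x = v i.
  by move=> x; exists (cast_ord cardT (enum_rank x)); rewrite /v cast_ordK enum_rankK.
pose g (a b c : nat) := [set v (inord a); v (inord b); v (inord c)] \in E.
have S1 : forall a b c, g a b c = g b a c.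
  move=> a b c; rewrite /g; congr (_ \in E); apply/setP => w; rewrite !inE.
  by case: (w == v (inord a)); case: (w == v (inord b)).
have S2 : forall a b c, g a b c = g a c b.
  move=> a b c; rewrite /g; congr (_ \in E); apply/setP => w; rewrite !inE.
  by case: (w == v (inord a)); case: (w == v (inord b)); case: (w == v (inord c)).
have shB : shadowB (lk (mkbits g)).
  apply/allP => a; rewrite mem_iota add0n => /andP [_ Ha].
  apply/allP => b; rewrite mem_iota add0n => /andP [_ Hb].
  apply/implyP => Hab.
  have Hab' : a != b by rewrite neq_ltn Hab.
  have Hxy : v (inord a) != v (inord b).
    rewrite (inj_eq vinj); apply/negP => /eqP /(congr1 val).
    by rewrite /= !inordK // => /eqP; apply/negP.
  have [e He /andP [Hx Hy]] := Hsh _ _ Hxy.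
  have He3 := H3 e He.
  have Hc1 : #|e :\ v (inord a) :\ v (inord b)| == 1.
    move: He3; rewrite (cardsD1 (v (inord a))) Hx (cardsD1 (v (inord b)) (e :\ _)).
    by rewrite !inE eq_sym Hxy Hy /= add1n add1n => -[->].
  have [z Hz] := cards1P Hc1.
  have : z \in e :\ v (inord a) :\ v (inord b) by rewrite Hz set11.
  rewrite !inE => /and3P [Hzb Hza Hze].
  have [c Hc] := vsurj z.
  apply/hasP; exists (val c); first exact: mem5 (ltn_ord c).
  have Hca : val c != a.
    apply/negP => /eqP Hca; move: Hza; rewrite Hc -Hca inord_val eqxx //.
  have Hcb : val c != b.
    apply/negP => /eqP Hcb; move: Hzb; rewrite Hc -Hcb inord_val eqxx //.
  rewrite /= Hca Hcb /= link //; try by rewrite eq_sym.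
  rewrite /g inord_val -Hc.
  suff -> : [set v (inord a); v (inord b); z] = e by [].
  rewrite -(setD1K Hx) -(setD1K (_ : v (inord b) \in e :\ v (inord a))) ?Hz.
    by apply/setP => w; rewrite !inE orbA.
  by rewrite !inE eq_sym Hxy.
have := allP big_check (mkbits g) (@allbitsP 10 _ (size_map _ triples)).
rewrite shB /= => Hpat.
have Hh : forall a b c, a < 5 -> b < 5 -> c < 5 -> a != b -> a != c -> b != c ->
     lk (mkbits g) a b c -> [set v (inord a); v (inord b); v (inord c)] \in E.
  by move=> a b c Ha Hb Hc Hab Hac Hbc; rewrite link.
case/or3P: Hpat => Hp.
- apply: fK; apply: (@embed_ok 3 K43m LK _ _ _ _ vinj Hh) => //.
  move=> e; rewrite /K43m !inE; do ! case/orP; move/eqP ->;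
  first [ by exists (0,1,2) | by exists (0,1,3) | by exists (0,2,3)].
- apply: fC; apply: (@embed_ok 4 C5 LC _ _ _ _ vinj Hh) => //.
  move=> e; rewrite /C5 /F32 !inE; do ! case/orP; move/eqP ->;
  first [ by exists (0,1,2) | by exists (1,2,3) | by exists (2,3,4) | by exists (0,3,4) | by exists (0,1,4)].
- apply: fF; apply: (@embed_ok 4 F32 LF _ _ _ _ vinj Hh) => //.
  move=> e; rewrite /C5 /F32 !inE; do ! case/orP; move/eqP ->;
  first [ by exists (0,1,2) | by exists (0,3,4) | by exists (1,3,4) | by exists (2,3,4)].
Qed.
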